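(* Let ${\bf u}\in\mathcal A^{\mathbb N}$ have its language closed under reversal. If $D({\bf u})<+\infty$, then there exists an integer $K$ such that every bispecial factor $w$ of ${\bf u}$ with $|w|\ge K$ satisfies $m(w)=0$ if $w\ne\widetilde w$, and $m(w)=\#E^=(w)-1$ if $w=\widetilde w$.
   Context: $\widetilde w$ is the reversal of $w$. Palindromic defect: for a finite word $w$ of length $n$, $D(w)=n+1-$(number of distinct palindromic factors of $w$, including the empty word), and $D({\bf u})=\sup D(w)$ over factors of ${\bf u}$. The language is closed under reversal if the reversal of every factor is a factor. For a factor $w$: $E^+(w)=\{b: wb\text{ factor}\}$, $E^-(w)=\{a: aw\text{ factor}\}$, $E(w)=\{(a,b): awb\text{ factor}\}$, $E^=(w)=\{a: awa\text{ factor}\}$, $m(w)=\#E(w)-\#E^+(w)-\#E^-(w)+1$. A factor is bispecial if $\#E^-(w)\ge2$ and $\#E^+(w)\ge 2$. *)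

(* Defs.v *)
From mathcomp Require Import all_boot all_order all_algebra.
From mathcomp Require Import boolp.
Set Implicit Arguments. Unset Strict Implicit. Unset Printing Implicit Defensive.

Section Words.
Variable A : finType.

Definition factor (u : nat -> A) (w : seq A) : Prop :=
  exists i : nat, w = [seq u (i + k) | k <- iota 0 (size w)].

Definition closed_under_reversal (u : nat -> A) : Prop :=
  forall w, factor u w -> factor u (rev w).

(* All (distinct) factors of a finite word, including the empty word. *)
Definition fin_factors (w : seq A) : seq (seq A) :=
  undup [seq take j (drop i w) | i <- iota 0 (size w).+1,
                                 j <- iota 0 (size w - i).+1].

Definition is_pal (v : seq A) : bool := v == rev v.

Definition pal_defect (w : seq A) : nat :=
  (size w).+1 - count is_pal (fin_factors w).

Definition finite_defect (u : nat -> A) : Prop :=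
  exists B : nat, forall w, factor u w -> pal_defect w <= B.

Definition Eright (u : nat -> A) (w : seq A) : {set A} :=
  [set b : A | `[< factor u (rcons w b) >]].
Definition Eleft (u : nat -> A) (w : seq A) : {set A} :=
  [set a : A | `[< factor u (a :: w) >]].
Definition Eboth (u : nat -> A) (w : seq A) : {set A * A} :=
  [set p : A * A | `[< factor u (p.1 :: rcons w p.2) >]].
Definition Eeq (u : nat -> A) (w : seq A) : {set A} :=
  [set a : A | `[< factor u (a :: rcons w a) >]].

Definition bilat_mult (u : nat -> A) (w : seq A) : int :=
  (#|Eboth u w|%:Z - #|Eright u w|%:Z - #|Eleft u w|%:Z + 1)%R.

Definition bispecial (u : nat -> A) (w : seq A) : Prop :=
  factor u w /\ 2 <= #|Eleft u w| /\ 2 <= #|Eright u w|.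

End Words.

(* Main.v *)
Require Import Defs.
From mathcomp Require Import all_boot all_order all_algebra.
From mathcomp Require Import boolp zify.
Set Implicit Arguments. Unset Strict Implicit. Unset Printing Implicit Defensive.

Module P1.

Section S.
Variable A : finType.
Variable u : nat -> A.

Definition blk i l : seq A := mkseq (fun k => u (i + k)) l.

Lemma size_blk i l : size (blk i l) = l.
Proof. by rewrite size_mkseq. Qed.

Lemma nth_blk x0 i l k : k < l -> nth x0 (blk i l) k = u (i + k).
Proof. by move=> h; rewrite nth_mkseq. Qed.

Lemma factorE w : factor u w <-> exists i, w = blk i (size w).
Proof. by []. Qed.

Lemma blk_eqP i j l : blk i l = blk j l <-> forall k, k < l -> u (i + k) = u (j + k).
Proof.
split.
  by move=> h k hk; rewrite -(nth_blk (u 0) i hk) h nth_blk.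
move=> h; apply: (@eq_from_nth _ (u 0)); rewrite ?size_blk // => k hk.
by rewrite !nth_blk // h.
Qed.

Lemma blk_revP i j l : blk i l = rev (blk j l) <-> forall k, k < l -> u (i + k) = u (j + (l - 1 - k)).
Proof.
split.
  move=> h k hk; rewrite -(nth_blk (u 0) i hk) h nth_rev size_blk // nth_blk; last by lia.
  by congr (u _); lia.
move=> h; apply: (@eq_from_nth _ (u 0)); rewrite ?size_rev ?size_blk // => k hk.
rewrite nth_rev size_blk // nth_blk // nth_blk; last by lia.
by rewrite h //; congr (u _); lia.
Qed.

Lemma palP i l : is_pal (blk i l) <-> forall k, k < l -> u (i + k) = u (i + (l - 1 - k)).
Proof. by rewrite /is_pal; split => [/eqP/blk_revP|/blk_revP/eqP]. Qed.

Lemma blk_cons i l : blk i l.+1 = u i :: blk i.+1 l.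
Proof.
apply: (@eq_from_nth _ (u 0)); first by rewrite size_blk /= size_blk.
rewrite size_blk => -[|k] hk.
  by rewrite nth_blk // addn0.
rewrite nth_blk // [RHS]/= nth_blk //; congr (u _); lia.
Qed.

Lemma blk_rcons i l : blk i l.+1 = rcons (blk i l) (u (i + l)).
Proof.
apply: (@eq_from_nth _ (u 0)); rewrite ?size_rcons ?size_blk // => k hk.
rewrite nth_rcons size_blk nth_blk //.
case: ltngtP => h; [by rewrite nth_blk | lia | by rewrite h].
Qed.

Lemma blk_sub i l j l' : j + l' <= l -> blk (i + j) l' = take l' (drop j (blk i l)).
Proof.
move=> h; have hs : size (take l' (drop j (blk i l))) = l'.
  by rewrite size_takel // size_drop size_blk; lia.
apply: (@eq_from_nth _ (u 0)); rewrite ?hs ?size_blk // => k hk'.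
rewrite nth_take // nth_drop nth_blk; last by lia.
by rewrite nth_blk ?addnA //; lia.
Qed.



Lemma mem_ff e v : v \in fin_factors (blk 0 e) <-> exists i, i + size v <= e /\ v = blk i (size v).
Proof.
rewrite /fin_factors mem_undup size_blk; split.
  case/allpairsPdep => x [y [hx hy ->]].
  move: hx hy; rewrite !mem_iota !add0n => hx hy.
  have hxy : x + y <= e by lia.
  exists x; rewrite size_takel; last by rewrite size_drop size_blk; lia.
  by split => //; rewrite -(add0n x) (@blk_sub 0 e).
case=> i [hi ->]; apply/allpairsPdep; exists i, (size (blk i (size v))).
rewrite !mem_iota size_blk; split; try lia.
by rewrite -(add0n i) (@blk_sub 0 e) ?add0n.
Qed.

Definition palfac e := [seq v <- fin_factors (blk 0 e) | is_pal v].

Lemma palfac_uniq e : uniq (palfac e).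
Proof. by rewrite filter_uniq // undup_uniq. Qed.

Lemma mem_palfac e v : v \in palfac e <-> is_pal v /\ exists i, i + size v <= e /\ v = blk i (size v).
Proof. by rewrite mem_filter -mem_ff; split => [/andP[-> ->]|[-> ->]]. Qed.

Definition psuf e l := (l <= e) && is_pal (blk (e - l) l).

Lemma lps_ex e : exists l, psuf e l /\ forall l', psuf e l' -> l' <= l.
Proof.
have ex : exists l, psuf e l by exists 0; rewrite /psuf /= /is_pal /blk /=.
have ub : forall l, psuf e l -> l <= e by move=> l /andP[].
by case: (ex_maxnP ex ub) => l hl hm; exists l.
Qed.

Lemma pal_mono e : {subset palfac e <= palfac e.+1}.
Proof.
move=> v /mem_palfac [hp [i [hi hv]]]; apply/mem_palfac; split => //.
by exists i; split => //; lia.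
Qed.

Lemma pal_new e l : psuf e.+1 l -> (forall l', psuf e.+1 l' -> l' <= l) ->
  {subset palfac e.+1 <= blk (e.+1 - l) l :: palfac e}.
Proof.
move=> /andP[hle hpl] hmax v /mem_palfac [hp [i [hi hv]]].
rewrite inE; case: (leqP (i + size v) e) => hie.
  by apply/orP; right; apply/mem_palfac; split => //; exists i.
have hi' : i = e.+1 - size v by lia.
have hvl : size v <= l.
  apply: hmax; rewrite /psuf -hi' -hv hp andbT; lia.
case: (ltngtP (size v) l) => hc; first last.
- by rewrite hv hi' hc eqxx.
- lia.
apply/orP; right; apply/mem_palfac; split => //; exists (e.+1 - l); split; first by lia.
rewrite {1}hv; apply/blk_eqP => k hk.
move: hp; rewrite {1}hv => /palP hp; move/palP: hpl => hpl.
rewrite hp // hpl; last by lia.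
congr (u _); lia.
Qed.

Lemma pal_old e l x : psuf e.+1 l -> (forall l', psuf e.+1 l' -> l' <= l) ->
  x + l < e.+1 -> blk x l = blk (e.+1 - l) l -> {subset palfac e.+1 <= palfac e}.
Proof.
move=> hs hmax hx hb v hv; have := pal_new hs hmax hv; rewrite inE => /orP[/eqP ->|//].
move/andP: hs => [_ hp]; apply/mem_palfac; split => //.
by exists x; rewrite size_blk hb; split => //; lia.
Qed.

Definition Pc e := count (@is_pal A) (fin_factors (blk 0 e)).

Lemma PcE e : Pc e = size (palfac e).
Proof. by rewrite /Pc size_filter. Qed.

Lemma Pc_mono e : Pc e <= Pc e.+1.
Proof. by rewrite !PcE; apply: uniq_leq_size (palfac_uniq e) (@pal_mono e). Qed.

Lemma Pc_step e : Pc e.+1 <= (Pc e).+1.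
Proof.
have [l [hs hm]] := lps_ex e.+1.
rewrite !PcE; have := uniq_leq_size (palfac_uniq e.+1) (pal_new hs hm).
by rewrite /=.
Qed.

Lemma Pc0 : Pc 0 = 1.
Proof. by []. Qed.

Lemma Pc_le e : Pc e <= e.+1.
Proof. elim: e => [|e ih]; first by rewrite Pc0. by have := Pc_step e; lia. Qed.

Lemma eventually_const (f : nat -> nat) B : (forall e, f e <= f e.+1) -> (forall e, f e <= B) ->
  exists N, forall e, N <= e -> f e = f N.
Proof.
move=> hm hb.
have hmono : forall a b, a <= b -> f a <= f b.
  move=> a b /subnK <-; elim: (b - a) => [|k ih]; first by rewrite add0n.
  by apply: leq_trans ih _; rewrite addSn hm.
suff: forall k N0, B - f N0 <= k -> exists N, forall e, N <= e -> f e = f N.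
  by move/(_ (B - f 0) 0 (leqnn _)).
elim=> [|k ih] N0 hk.
  exists N0 => e he; apply/eqP; rewrite eqn_leq (hmono N0 e he) andbT.
  by have := hb e; have := hb N0; move: hk; clear; lia.
case: (pselect (exists e, N0 <= e /\ f e != f N0)) => [[e [he hne]]|hno].
  apply: (ih e); have := hmono _ _ he; have := hb e; move: hne; lia.
exists N0 => e he; apply/eqP; apply/negPn/negP => hne; apply: hno; by exists e.
Qed.

Lemma S_prop : finite_defect u -> exists N, forall e l x, N < e -> psuf e l ->
  (forall l', psuf e l' -> l' <= l) -> x + l < e -> blk x l != blk (e - l) l.
Proof.
case=> B hB.
pose D e := pal_defect (blk 0 e).
have DE : forall e, D e = e.+1 - Pc e by move=> e; rewrite /D /pal_defect size_blk.
have hDm : forall e, D e <= D e.+1.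
  move=> e; rewrite !DE; have := Pc_step e; have := Pc_le e; lia.
have hDb : forall e, D e <= B.
  move=> e; apply: hB; exists 0; by rewrite size_blk.
have [N hN] := eventually_const hDm hDb.
exists N => -[|e] l x hNe hs hm hx; first by lia.
apply/negP => /eqP hb.
have hsub := pal_old hs hm hx hb.
have : Pc e.+1 <= Pc e by rewrite !PcE; apply: uniq_leq_size (palfac_uniq _) hsub.
have := Pc_mono e; have := Pc_le e; have := hN e; have := hN e.+1; rewrite !DE; lia.
Qed.

End S.

End P1.
Import P1.

Module P2.

Section S2.
Variable A : finType.
Variable u : nat -> A.
Local Notation blk := (blk u).

Definition cls (f : seq A) k := (blk k (size f) == f) || (blk k (size f) == rev f).

Lemma clsP f k : cls f k <-> blk k (size f) = f \/ blk k (size f) = rev f.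
Proof.
rewrite /cls; split; first by case/orP => /eqP; tauto.
by case=> ->; rewrite eqxx ?orbT.
Qed.

Lemma cls2 f a b : cls f a -> cls f b ->
  blk a (size f) = blk b (size f) \/ blk a (size f) = rev (blk b (size f)).
Proof.
move=> /clsP [->|->] /clsP [->|->]; rewrite ?revK; tauto.
Qed.

Lemma cls_eq f a b : blk a (size f) = blk b (size f) -> cls f a = cls f b.
Proof. by rewrite /cls => ->. Qed.

Lemma cls_rev f a b : blk a (size f) = rev (blk b (size f)) -> cls f a = cls f b.
Proof.
rewrite /cls => ->; set L := size f.
apply/idP/idP => /orP[/eqP h|/eqP h]; apply/orP.
- by right; rewrite -h revK eqxx.
- by left; rewrite -(revK (blk b _)) h revK eqxx.
- by right; rewrite h eqxx.
- by left; rewrite h revK eqxx.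
Qed.

Lemma sub_eq q i len k L : blk q len = blk i len -> k + L <= len -> blk (q + k) L = blk (i + k) L.
Proof.
move=> /blk_eqP h hk; apply/blk_eqP => r hr.
by rewrite -!addnA h //; lia.
Qed.

Lemma sub_rev q i len k L : blk q len = rev (blk i len) -> k + L <= len ->
  blk (q + k) L = rev (blk (i + (len - L - k)) L).
Proof.
move=> /blk_revP h hk; apply/blk_revP => r hr.
rewrite -addnA h; last by lia.
congr (u _); lia.
Qed.

Lemma rev_pal (v : seq A) : is_pal v -> is_pal (rev v).
Proof. by rewrite /is_pal revK => /eqP h; rewrite -{1}h. Qed.

Variable N : nat.
Hypothesis hS : forall e l x, N < e -> psuf u e l ->
  (forall l', psuf u e l' -> l' <= l) -> x + l < e -> blk x l != blk (e - l) l.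

Lemma Ulem f i j : N < size f -> i < j -> cls f i -> cls f j ->
  (forall k, i < k < j -> ~~ cls f k) -> is_pal (blk i (j + size f - i)).
Proof.
move=> hN hij hci hcj hint.
set L := size f in hN hci hcj hint *.
set len := j + L - i.
have hlen : L < len by rewrite /len; lia.
set z := blk i len.
pose goodP q := [/\ cls f q, cls f (q + (len - L)) &
    forall k, 0 < k < len - L -> ~~ cls f (q + k)].
have gi : goodP i.
  split => //; first by rewrite (_ : i + (len - L) = j) //; rewrite /len; lia.
  by move=> k hk; apply: hint; lia.
have transfer : forall q, blk q len = z \/ blk q len = rev z -> goodP q.
  move=> q [hq|hq].
  - have key : forall k, k <= len - L -> cls f (q + k) = cls f (i + k).
      by move=> k hk; apply: cls_eq; apply: sub_eq hq _; lia.
    case: gi => g1 g2 g3; split.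
    + by rewrite -(addn0 q) key // addn0.
    + by rewrite key.
    + by move=> k hk; rewrite key ?g3 //; lia.
  - have key : forall k, k <= len - L -> cls f (q + k) = cls f (i + (len - L - k)).
      by move=> k hk; apply: cls_rev; apply: sub_rev hq _; lia.
    case: gi => g1 g2 g3; split.
    + by rewrite -(addn0 q) key // subn0.
    + by rewrite key // subnn addn0.
    + by move=> k hk; rewrite key ?g3 //; lia.
pose Q e := (len <= e) && ((blk (e - len) len == z) || (blk (e - len) len == rev z)).
have exQ : exists e, Q e.
  exists (i + len); rewrite /Q leq_addl /= (_ : i + len - len = i) ?eqxx //; lia.
case: (ex_minnP exQ) => e /andP [hle hQ] hmin.
set q := e - len.
have hq : blk q len = z \/ blk q len = rev z by case/orP: hQ => /eqP ->; tauto.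
case: (transfer q hq) => gq1 gq2 gq3.
have hqe : q + (len - L) = e - L by rewrite /q; lia.
rewrite hqe in gq2.
have [l [hs hmax]] := lps_ex u e.
have hs' := hs; move/andP: hs' => [hle' /palP hpal].
have hNe : N < e by lia.
case: (ltngtP len l) => hc.
- (* len < l : earlier occurrence *)
  have hr : blk (e - l) len = rev (blk q len).
    apply/blk_revP => k hk; rewrite hpal; last by lia.
    congr (u _); rewrite /q; lia.
  have : Q (e - l + len).
    rewrite /Q leq_addl /= (_ : e - l + len - len = e - l); last by lia.
    rewrite hr; case: hq => ->; rewrite ?revK eqxx ?orbT //.
  move/hmin; lia.
-
  case: (ltngtP L l) => hc2.
  +
    have : cls f (q + (len - l)).
      rewrite (_ : q + (len - l) = e - l); last by rewrite /q; lia.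
      rewrite (cls_rev (b := e - L)) //.
      apply/blk_revP => k hk; rewrite hpal; last by lia.
      congr (u _); lia.
    move=> hcl; suff: ~~ cls f (q + (len - l)) by rewrite hcl.
    apply: gq3; lia.
  +
    case: (cls2 gq1 gq2) => hb.
    * have h2 : q + (L - l) + l < e by rewrite /q; lia.
      exfalso; move/negP: (hS hNe hs hmax h2); apply.
      apply/eqP/blk_eqP => k hk.
      move/blk_eqP: hb => hb; rewrite -addnA hb; last by lia.
      congr (u _); lia.
    * have h2 : q + l < e by rewrite /q; lia.
      exfalso; move/negP: (hS hNe hs hmax h2); apply.
      apply/eqP/blk_eqP => k hk.
      move/blk_revP: hb => hb; rewrite hb; last by lia.
      rewrite hpal //; congr (u _); lia.
  +
    have hpL : is_pal (blk (e - L) L) by rewrite hc2; apply/palP.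
    have hb : blk q L = blk (e - L) L.
      case: (cls2 gq1 gq2) => // ->; move: hpL; rewrite /is_pal => /eqP <-; by [].
    have h2 : q + l < e by rewrite /q; lia.
    exfalso; move/negP: (hS hNe hs hmax h2); apply.
    by rewrite -hc2 hb.
-
  have hpz : is_pal (blk q len) by rewrite /q hc; apply/palP.
  case: hq => hq; rewrite -/z; first by rewrite -hq.
  by rewrite -(revK z) -hq; apply: rev_pal.
Qed.

End S2.

End P2.
Import P2.

Module P3.

Section Walk.
Variable V : finType.
Variable X : nat -> V.

Definition Vset m := [set v | `[< exists j, j <= m /\ X j = v >]].
Definition Uset m := [set q : V * V | `[< exists j, j < m /\ X j != X j.+1 /\
    (q = (X j, X j.+1) \/ q = (X j.+1, X j)) >]].

Lemma inV m v : v \in Vset m <-> exists j, j <= m /\ X j = v.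
Proof. by rewrite inE; split => /asboolP. Qed.

Lemma inU m q : q \in Uset m <-> exists j, j < m /\ X j != X j.+1 /\
    (q = (X j, X j.+1) \/ q = (X j.+1, X j)).
Proof. by rewrite inE; split => /asboolP. Qed.

Lemma Vset_S m : Vset m.+1 = X m.+1 |: Vset m.
Proof.
apply/setP => v; rewrite in_setU1; apply/idP/idP.
- move/inV => [j [hj <-]]; case: (ltngtP j m.+1) => hc.
  + by apply/orP; right; apply/inV; exists j; split => //; lia.
  + lia.
  + by rewrite hc eqxx.
- case/orP => [/eqP ->|/inV [j [hj <-]]]; apply/inV; first by exists m.+1.
  by exists j; split => //; lia.
Qed.

Lemma Uset_sub m : {subset Uset m <= Uset m.+1}.
Proof.
move=> q /inU [j [hj rest]]; apply/inU; exists j; split => //; lia.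
Qed.

Lemma U_in_V m q : q \in Uset m -> (q.1 \in Vset m) && (q.2 \in Vset m).
Proof.
move/inU => [j [hj [_ [->|->]]]] /=; apply/andP; split; apply/inV;
  (exists j; split => //; lia) || (exists j.+1; split => //; lia).
Qed.

Lemma walk_count m : (forall s t, s < t <= m -> X s = X t ->
    (forall r, s < r < t -> X r != X s) -> X s.+1 = X t.-1) ->
  #|Uset m| + 2 = 2 * #|Vset m|.
Proof.
elim: m => [|m ih] hEP.
  have -> : Uset 0 = set0 by apply/setP => q; rewrite in_set0; apply/negP => /inU [j [hj _]].
  have -> : Vset 0 = [set X 0].
    apply/setP => v; rewrite inE; apply/idP/idP.
      by move/inV => [j [hj <-]]; move: hj; rewrite leqn0 => /eqP ->.
    by move/eqP => ->; apply/inV; exists 0.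
  by rewrite cards0 cards1.
have ih' := ih (fun s t h => hEP s t (ltac:(lia))).
case: (eqVneq (X m) (X m.+1)) => hloop.
-
  have -> : Uset m.+1 = Uset m.
    apply/setP => q; apply/idP/idP; last by apply: Uset_sub.
    move/inU => [j [hj [hne hq]]]; apply/inU; exists j; split => //.
    case: (ltngtP j m) => hc //; first lia.
    by move: hne; rewrite hc hloop eqxx.
  have -> : Vset m.+1 = Vset m.
    by rewrite Vset_S; apply/setUidPr; rewrite sub1set; apply/inV; exists m; split.
  exact: ih'.
case hin : (X m.+1 \in Vset m).
-
  have exs : exists s, (s <= m) && (X s == X m.+1).
    by move/inV: hin => [s [hs <-]]; exists s; rewrite hs eqxx.
  have ubs : forall s, (s <= m) && (X s == X m.+1) -> s <= m by move=> s /andP[].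
  case: (ex_maxnP exs ubs) => s /andP [hsm /eqP hXs] hmax.
  have hsm' : s < m.
    case: (ltngtP s m) => hc //; first lia.
    by move: hloop; rewrite -hXs hc eqxx.
  have hstep : X s.+1 = X m.
    have := hEP s m.+1 (ltac:(lia)) hXs; rewrite /=; apply.
    move=> r hr; apply/negP => /eqP hr'.
    have := hmax r; rewrite hr' hXs eqxx andbT; move=> h.
    have : r <= s by apply: h; lia.
    lia.
  have hne : X s != X s.+1 by rewrite hXs hstep eq_sym.
  have -> : Uset m.+1 = Uset m.
    apply/setP => q; apply/idP/idP; last by apply: Uset_sub.
    move/inU => [j [hj [hne' hq]]]; apply/inU.
    case: (ltngtP j m) => hc.
    + by exists j.
    + lia.
    + exists s; split => //; split => //; rewrite hXs hstep; move: hq; rewrite hc; tauto.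
  have -> : Vset m.+1 = Vset m.
    by rewrite Vset_S; apply/setUidPr; rewrite sub1set.
  exact: ih'.
-
  have -> : Uset m.+1 = (X m, X m.+1) |: ((X m.+1, X m) |: Uset m).
    apply/setP => q; rewrite !in_setU1; apply/idP/idP.
    + move/inU => [j [hj [hne' hq]]].
      case: (ltngtP j m) => hc.
      * by rewrite orbA; apply/orP; right; apply/inU; exists j.
      * lia.
      * by move: hq; rewrite hc => -[->|->]; rewrite eqxx ?orbT.
    + case/orP => [/eqP ->|/orP[/eqP ->|hq]]; last by apply: Uset_sub.
      * by apply/inU; exists m; split => //; split => //; left.
      * by apply/inU; exists m; split => //; split => //; right.
  rewrite Vset_S !cardsU1 hin.
  have h1 : (X m.+1, X m) \notin Uset m.
    by apply/negP => /U_in_V /andP [/= h _]; rewrite h in hin.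
  have h2 : (X m, X m.+1) \notin (X m.+1, X m) |: Uset m.
    rewrite in_setU1 negb_or; apply/andP; split.
      by apply/negP => /eqP [h _]; move: hloop; rewrite h eqxx.
    by apply/negP => /U_in_V /andP [_ /= h]; rewrite h in hin.
  rewrite h1 h2 /= mulnDr -ih' muln1; set U := #|Uset m|; clearbody U; lia.
Qed.

End Walk.

End P3.
Import P3.

Module P4.

Section S4.
Variable A : finType.
Variable u : nat -> A.
Local Notation blk := (blk u).
Variable N : nat.
Hypothesis hS : forall e l x, N < e -> psuf u e l ->
  (forall l', psuf u e l' -> l' <= l) -> x + l < e -> blk x l != blk (e - l) l.

Variable w : seq A.
Variable M : nat.
Local Notation n := (size w).
Hypothesis hn : N < n.

Definition ps := [seq k <- iota 1 M | cls u w k].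
Local Notation m := (size ps).
Definition p j := nth 0 ps j.

Lemma p_range j : j < m -> 0 < p j <= M /\ cls u w (p j).
Proof.
move=> hj; have := mem_nth 0 hj; rewrite mem_filter mem_iota => /andP [hc hr].
split => //; rewrite /p; lia.
Qed.

Lemma p_sorted : sorted ltn ps.
Proof. by apply: sorted_filter; [apply: ltn_trans | apply: iota_ltn_sorted]. Qed.

Lemma p_mono j j' : j < j' -> j' < m -> p j < p j'.
Proof.
move=> h h'; apply: (sorted_ltn_nth ltn_trans 0 p_sorted) => //; rewrite inE; lia.
Qed.

Lemma p_lt j j' : j < m -> j' < m -> (p j < p j') = (j < j').
Proof.
move=> hj hj'; case: (ltngtP j j') => h.
- exact: p_mono.
- by apply/negbTE; rewrite -leqNgt ltnW // p_mono.
- by rewrite h ltnn.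
Qed.

Lemma p_index k : 0 < k <= M -> cls u w k -> exists r, r < m /\ p r = k.
Proof.
move=> hk hc; have hin : k \in ps by rewrite mem_filter hc mem_iota; lia.
by exists (index k ps); rewrite index_mem /p nth_index.
Qed.

Lemma p_consec j : j.+1 < m -> forall k, p j < k < p j.+1 -> ~~ cls u w k.
Proof.
move=> hj k hk; apply/negP => hc.
have [/andP[h1 h1'] _] := p_range (ltnW hj); have [/andP[h2 h2'] _] := p_range hj.
have [r [hr hpr]] := @p_index k (ltac:(lia)) hc.
have : p j < p r by lia.
rewrite p_lt //; last lia.
have : p r < p j.+1 by lia.
rewrite p_lt //; lia.
Qed.

Definition B j := blk (p j) n.
Definition c j := u (p j).-1.
Definition d j := u (p j + n).

Lemma B_cls j : j < m -> B j = w \/ B j = rev w.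
Proof. by move=> hj; have [_ /clsP] := p_range hj. Qed.

Lemma lvl_n j : j.+1 < m -> B j.+1 = rev (B j) /\ d j = c j.+1.
Proof.
move=> hj.
have hlt : p j < p j.+1 by rewrite p_lt //; lia.
have hU := Ulem hS hn hlt (proj2 (p_range (ltnW hj))) (proj2 (p_range hj)) (p_consec hj).
move/palP: hU => hU.
have [/andP[h1 _] _] := p_range (ltnW hj).
split.
- apply/blk_revP => k hk; rewrite (_ : p j.+1 + k = p j + (p j.+1 - p j + k)); last by lia.
  rewrite hU; last by lia.
  congr (u _); lia.
- have h := hU n (ltac:(lia)).
  rewrite /d /c h; congr (u _); lia.
Qed.

Definition X j := if j is j'.+1 then (rev (B j') == w, d j') else (B 0 == w, c 0).

Lemma X_lt j : j < m -> X j = (B j == w, c j).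
Proof.
case: j => [//|j] hj /=; by have [-> ->] := lvl_n hj.
Qed.

Lemma eqw (x y : seq A) : (x = w \/ x = rev w) -> (y = w \/ y = rev w) -> (x == w) = (y == w) -> x = y.
Proof.
case: (eqVneq w (rev w)) => hw.
  by move=> hx hy _; rewrite -hw in hx hy; case: hx hy => -> [->|->].
case=> -> [] -> //; rewrite eqxx; first by move/esym/eqP.
by rewrite eq_sym (negbTE hw).
Qed.

Lemma rev_cls (x : seq A) : (x = w \/ x = rev w) -> (rev x = w \/ rev x = rev w).
Proof. by case=> ->; rewrite ?revK; tauto. Qed.

Lemma blk_ext i l : 0 < i -> blk i.-1 l.+2 = u i.-1 :: rcons (blk i l) (u (i + l)).
Proof. by move=> hi; rewrite blk_cons prednK // blk_rcons. Qed.

Lemma EP s t : s < t <= m -> X s = X t -> (forall r, s < r < t -> X r != X s) -> X s.+1 = X t.-1.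
Proof.
move=> hst hX hr.
case: (eqVneq t s.+1) => [ht|hts]; first by move: hX; rewrite ht /= => ->.
have hs : s < m by lia.
have ht1 : t.-1 < m by lia.
have hst1 : s < t.-1 by lia.
have hXs := X_lt hs.
have hXt : X t = (rev (B t.-1) == w, d t.-1) by case: t hst hX hr hts ht1 hst1 => [|t'] //=; lia.
rewrite hXs hXt in hX; case: hX => hbw hcd.
have hBs : B s = rev (B t.-1).
  by apply: eqw => //; [apply: B_cls | apply: rev_cls; apply: B_cls].
have [/andP[hps _] hcs] := p_range hs.
have [/andP[hpt hptM] hct] := p_range ht1.
have hpst : p s < p t.-1 by rewrite p_lt.
set f := blk (p s).-1 n.+1.
have hf : f = c s :: B s by rewrite /f blk_cons prednK.
have hsf : size f = n.+1 by rewrite size_blk.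
have c1 : cls u f (p s).-1 by rewrite /cls hsf eqxx.
have c2 : cls u f (p t.-1).
  apply/clsP; right; rewrite hsf blk_rcons hf rev_cons hBs revK hcd.
  by rewrite /B /d.
have hint : forall k, (p s).-1 < k < p t.-1 -> ~~ cls u f k.
  move=> k hk; apply/negP => /clsP; rewrite hsf; case => hk'.
  - move: hk'; rewrite hf blk_cons => -[hu hb].
    have hcw : cls u w k.+1 by apply/clsP; rewrite -/(blk k.+1 n) hb; apply: B_cls.
    have [r [hr' hpr]] := @p_index k.+1 (ltac:(lia)) hcw.
    have hsr : s < r by rewrite -(p_lt hs hr'); lia.
    have hrt : r < t.
      suff : ~~ (t.-1 < r) by lia.
      by rewrite -(p_lt ht1 hr'); lia.
    have := hr r (ltac:(lia)); rewrite X_lt // hXs.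
    by rewrite /B /c hpr hb /= hu eqxx.
  - move: hk'; rewrite hf rev_cons blk_rcons => /rcons_inj [hb hu].
    have hcw : cls u w k by apply/clsP; rewrite hb; apply: rev_cls; apply: B_cls.
    have [r [hr' hpr]] := @p_index k (ltac:(lia)) hcw.
    have hsr : s <= r.
      suff : ~~ (r < s) by lia.
      by rewrite -(p_lt hr' hs); lia.
    have hrt : r < t.-1 by rewrite -(p_lt hr' ht1); lia.
    have := hr r.+1 (ltac:(lia)); rewrite /= hXs.
    by rewrite /B /d hpr hb revK hu eqxx.
have hU := @Ulem _ u N hS f (p s).-1 (p t.-1) (ltac:(rewrite hsf; lia)) (ltac:(lia)) c1 c2 hint.
move/palP: hU; rewrite hsf => hU.
have := hU n.+1 (ltac:(lia)).
rewrite (_ : (p s).-1 + n.+1 = p s + n); last by lia.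
rewrite (_ : (p s).-1 + (p t.-1 + n.+1 - (p s).-1 - 1 - n.+1) = (p t.-1).-1); last by lia.
move=> hdc.
by rewrite (X_lt ht1) /= hBs revK /d /c hdc.
Qed.

End S4.

End P4.
Import P4.

Module P5.

Section S5.
Variable A : finType.
Variable u : nat -> A.
Local Notation blk := (blk u).
Hypothesis hrev : closed_under_reversal u.

Lemma factor_blk i l : factor u (blk i l).
Proof. by exists i; rewrite size_blk. Qed.

Lemma fac_pre v x : factor u (rcons v x) -> factor u v.
Proof.
case=> i; rewrite size_rcons => h.
have : rcons v x = blk i (size v).+1 := h.
rewrite blk_rcons => /rcons_inj [-> _]; exact: factor_blk.
Qed.

Lemma fac_suf x v : factor u (x :: v) -> factor u v.
Proof.
case=> i h; have : x :: v = blk i (size v).+1 := h.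
rewrite blk_cons => -[_ ->]; exact: factor_blk.
Qed.

Lemma fac_ext v : factor u v -> exists x, factor u (rcons v x).
Proof.
case=> i hv; exists (u (i + size v)).
have hv' : v = blk i (size v) := hv.
rewrite (_ : rcons v (u (i + size v)) = blk i (size v).+1); first exact: factor_blk.
by rewrite blk_rcons -hv'.
Qed.

Lemma rev_cr (a : A) v b : rev (a :: rcons v b) = b :: rcons (rev v) a.
Proof. by rewrite rev_cons rev_rcons rcons_cons. Qed.

Lemma fac_revcr a v b : factor u (a :: rcons v b) -> factor u (b :: rcons (rev v) a).
Proof. by move/hrev; rewrite rev_cr. Qed.

Variable w : seq A.
Local Notation n := (size w).

Lemma inEb a b : ((a, b) \in Eboth u w) <-> factor u (a :: rcons w b).
Proof. by rewrite inE; split => /asboolP. Qed.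
Lemma inEl a : (a \in Eleft u w) <-> factor u (a :: w).
Proof. by rewrite inE; split => /asboolP. Qed.
Lemma inEr a : (a \in Eright u w) <-> factor u (rcons w a).
Proof. by rewrite inE; split => /asboolP. Qed.
Lemma inEq a : (a \in Eeq u w) <-> factor u (a :: rcons w a).
Proof. by rewrite inE; split => /asboolP. Qed.

Lemma Eb_l a b : (a, b) \in Eboth u w -> a \in Eleft u w.
Proof. by move/inEb; rewrite -rcons_cons => /fac_pre /inEl. Qed.
Lemma Eb_r a b : (a, b) \in Eboth u w -> b \in Eright u w.
Proof. by move/inEb => /fac_suf /inEr. Qed.
Lemma El_b a : a \in Eleft u w -> exists b, (a, b) \in Eboth u w.
Proof. by move/inEl => /fac_ext [b]; rewrite rcons_cons => /inEb h; exists b. Qed.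
Lemma Er_b b : b \in Eright u w -> exists a, (a, b) \in Eboth u w.
Proof.
move/inEr => /hrev; rewrite rev_rcons => /fac_ext [a] /fac_revcr; rewrite revK => h.
by exists a; apply/inEb.
Qed.
Lemma Eb_rev a b : (a, b) \in Eboth u w -> w = rev w -> (b, a) \in Eboth u w.
Proof. by move/inEb => /fac_revcr h hw; apply/inEb; rewrite {1}hw. Qed.

Lemma bound_list (T : eqType) (P : T -> nat -> Prop) (s : seq T) :
  (forall t, t \in s -> exists k, P t k) -> exists K, forall t, t \in s -> exists k, k <= K /\ P t k.
Proof.
elim: s => [|x s ih] h; first by exists 0.
have [k hk] := h x (mem_head _ _).
have [K hK] := ih (fun t ht => h t (ltac:(by rewrite inE ht orbT))).
exists (maxn k K) => t; rewrite inE => /orP [/eqP ->|ht].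
  by exists k; split => //; apply: leq_maxl.
have [k' [hk' hP]] := hK t ht; exists k'; split => //.
by apply: leq_trans hk' (leq_maxr _ _).
Qed.

Lemma bound_M : exists M, forall a b, (a, b) \in Eboth u w ->
  (exists i, 0 < i <= M /\ blk i.-1 n.+2 = a :: rcons w b) /\
  (exists i, 0 < i <= M /\ blk i.-1 n.+2 = b :: rcons (rev w) a).
Proof.
pose P (t : A * A) k := t \in Eboth u w ->
  (exists i, 0 < i <= k /\ blk i.-1 n.+2 = t.1 :: rcons w t.2) /\
  (exists i, 0 < i <= k /\ blk i.-1 n.+2 = t.2 :: rcons (rev w) t.1).
have := @bound_list _ P (enum (@predT (A * A)%type)).
case.
- move=> [a b] _.
  case: (boolP ((a, b) \in Eboth u w)) => hin; last by exists 0 => h; rewrite h in hin.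
  have [i1 h1] := (inEb a b).1 hin.
  have [i2 h2] := fac_revcr ((inEb a b).1 hin).
  exists (i1.+1 + i2.+1) => _; split.
  + exists i1.+1; split; first lia.
    have -> : n.+2 = size (a :: rcons w b) by rewrite /= size_rcons.
    exact: (esym h1).
  + exists i2.+1; split; first lia.
    have -> : n.+2 = size (b :: rcons (rev w) a) by rewrite /= size_rcons size_rev.
    exact: (esym h2).
- move=> K hK; exists K => a b hab.
  have [k [hk hP]] := hK (a, b) (mem_enum _ _).
  have [[i [hi1 hi2]] [i' [hi1' hi2']]] := hP hab.
  split; [exists i | exists i']; split => //; lia.
Qed.

End S5.

End P5.
Import P5.

Module P6.

Section S6.
Variable A : finType.
Variable u : nat -> A.
Hypothesis hrev : closed_under_reversal u.
Variable N : nat.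
Hypothesis hS : forall e l x, N < e -> psuf u e l ->
  (forall l', psuf u e l' -> l' <= l) -> x + l < e -> blk u x l != blk u (e - l) l.
Variable w : seq A.
Variable M : nat.
Local Notation n := (size w).
Hypothesis hn : N < n.
Hypothesis hM : forall a b, (a, b) \in Eboth u w ->
  (exists i, 0 < i <= M /\ blk u i.-1 n.+2 = a :: rcons w b) /\
  (exists i, 0 < i <= M /\ blk u i.-1 n.+2 = b :: rcons (rev w) a).
Hypothesis hE0 : exists a, a \in Eleft u w.

Local Notation m := (size (ps u w M)).
Local Notation B := (B u w M).
Local Notation c := (c u w M).
Local Notation d := (d u w M).
Local Notation X := (X u w M).
Local Notation E := (Eboth u w).
Local Notation El := (Eleft u w).
Local Notation Er := (Eright u w).

Lemma occ_gen i v a b : 0 < i <= M -> blk u i.-1 n.+2 = a :: rcons v b -> (v = w \/ v = rev w) ->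
  exists j, j < m /\ B j = v /\ c j = a /\ d j = b.
Proof.
move=> hi; rewrite blk_ext; last by lia.
move=> [ha /rcons_inj [hv hb]] hvc.
have hsv : size v = n by case: hvc => ->; rewrite ?size_rev.
have hc : cls u w i by apply/clsP; rewrite hv.
have [r [hr hpr]] := p_index hn hi hc.
by exists r; rewrite /P4.B /P4.c /P4.d hpr hv ha hb.
Qed.

Lemma occ_w a b : (a, b) \in E -> exists j, j < m /\ B j = w /\ c j = a /\ d j = b.
Proof. by move=> /hM [[i [hi h]] _]; apply: occ_gen hi h _; left. Qed.

Lemma occ_rw a b : (a, b) \in E -> exists j, j < m /\ B j = rev w /\ c j = b /\ d j = a.
Proof. by move=> /hM [_ [i [hi h]]]; apply: occ_gen hi h _; right. Qed.

Lemma step_fac j : j < m -> factor u (c j :: rcons (B j) (d j)).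
Proof.
move=> hj; have [/andP [h1 _] _] := p_range hj.
rewrite /P4.c /P4.B /P4.d -blk_ext //; exact: factor_blk.
Qed.

Lemma m_pos : 0 < m.
Proof.
case: hE0 => a /El_b [b /occ_w [j [hj _]]]; lia.
Qed.

Lemma hW : #|Uset X m| + 2 = 2 * #|Vset X m|.
Proof. apply: walk_count => s t. have := @EP A u N hS w M hn s t. exact. Qed.


Lemma Xlt j : j < m -> X j = (B j == w, c j).
Proof. exact: (@X_lt A u N hS w M hn j). Qed.

Lemma st_w j : j < m -> B j = w -> (c j, d j) \in E.
Proof. by move=> hj hb; apply/inEb; have := step_fac hj; rewrite hb. Qed.

Lemma st_rw j : j < m -> B j = rev w -> (d j, c j) \in E.
Proof.
move=> hj hb; apply/inEb; have := fac_revcr hrev (step_fac hj).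
by rewrite hb revK.
Qed.

Definition f1 (pr : A * A) : (bool * A) * (bool * A) := ((true, pr.1), (false, pr.2)).
Definition f2 (pr : A * A) : (bool * A) * (bool * A) := ((false, pr.2), (true, pr.1)).

Lemma U_np : w != rev w -> Uset X m = f1 @: E :|: f2 @: E.
Proof.
move=> hw; have hw' : (rev w == w) = false by rewrite eq_sym; apply/negbTE.
apply/setP => q; apply/idP/idP.
- move/inU => [j [hj [hne hq]]]; rewrite Xlt // in hne hq; rewrite /= in hne hq.
  case: (B_cls hj) => hb; rewrite hb ?revK ?eqxx ?hw' in hne hq.
  + have hE := st_w hj hb.
    by case: hq => ->; apply/setUP; [left | right]; apply/imsetP; exists (c j, d j).
  + have hE := st_rw hj hb.
    by case: hq => ->; apply/setUP; [right | left]; apply/imsetP; exists (d j, c j).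
- case/setUP => /imsetP [[a b] hab ->]; have [j [hj [hb [hc hd]]]] := occ_w hab;
  apply/inU; exists j; (have hX1 : X j = (true, a) by rewrite Xlt // hb hc eqxx);
  (have hX2 : X j.+1 = (false, b) by rewrite /= hb hd hw');
  rewrite hX1 hX2; split => //; split => //; [left | right] => //.
Qed.

Lemma V_np : w != rev w ->
  Vset X m = (fun a => (true, a)) @: El :|: (fun b => (false, b)) @: Er.
Proof.
move=> hw; have hw' : (rev w == w) = false by rewrite eq_sym; apply/negbTE.
have hm := m_pos.
apply/setP => v; apply/idP/idP.
- move/inV => [j [hj <-]]; case: j hj => [|j] hj.
  + rewrite Xlt //; case: (B_cls hm) => hb; rewrite hb ?eqxx ?hw'; apply/setUP.
    * by left; apply/imsetP; exists (c 0) => //; apply: Eb_l (st_w hm hb).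
    * by right; apply/imsetP; exists (c 0) => //; apply: Eb_r (st_rw hm hb).
  + rewrite /=; case: (B_cls hj) => hb; rewrite hb ?revK ?eqxx ?hw'; apply/setUP.
    * by right; apply/imsetP; exists (d j) => //; apply: Eb_r (st_w hj hb).
    * by left; apply/imsetP; exists (d j) => //; apply: Eb_l (st_rw hj hb).
- case/setUP => /imsetP [a ha ->].
  + have [b hab] := El_b ha; have [j [hj [hb [hc _]]]] := occ_w hab.
    by apply/inV; exists j; split; [lia | rewrite Xlt // hb hc eqxx].
  + have [b hab] := Er_b hrev ha; have [j [hj [hb [hc _]]]] := occ_rw hab.
    by apply/inV; exists j; split; [lia | rewrite Xlt // hb hc hw'].
Qed.

Lemma count_np : w != rev w -> #|E| + 1 = #|El| + #|Er|.
Proof.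
move=> hw; have := hW; rewrite U_np // V_np //.
rewrite !cardsU.
have -> : f1 @: E :&: f2 @: E = set0.
  apply/setP => q; rewrite inE in_set0; apply/negP => /andP [/imsetP [x _ ->] /imsetP [y _]].
  by rewrite /f1 /f2 => -[].
have -> : (fun a => (true, a)) @: El :&: (fun b => (false, b)) @: Er = set0.
  apply/setP => q; rewrite inE in_set0; apply/negP => /andP [/imsetP [x _ ->] /imsetP [y _]].
  by case.
rewrite !cards0 !subn0 !card_imset; first last.
- by move=> x y [].
- by move=> x y [].
- by move=> [x1 x2] [y1 y2] [-> ->].
- by move=> [x1 x2] [y1 y2] [-> ->].
set e := #|E|; set l := #|El|; set r := #|Er|; clearbody e l r; lia.
Qed.


Definition g (pr : A * A) : (bool * A) * (bool * A) := ((true, pr.1), (true, pr.2)).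
Definition Dg : {set A * A} := [set pr | pr.1 == pr.2].

Lemma inDg pr : (pr \in Dg) = (pr.1 == pr.2).
Proof. by rewrite inE. Qed.

Lemma Bp j : w = rev w -> j < m -> B j = w.
Proof. by move=> hw hj; case: (B_cls hj) => // ->; rewrite -hw. Qed.

Lemma U_p : w = rev w -> Uset X m = g @: (E :\: Dg).
Proof.
move=> hw; have hw' : (rev w == w) by rewrite -hw.
apply/setP => q; apply/idP/idP.
- move/inU => [j [hj [hne hq]]]; rewrite Xlt // in hne hq; rewrite /= in hne hq.
  have hb := Bp hw hj; rewrite hb eqxx hw' in hne hq.
  have hE := st_w hj hb.
  have hcd : c j != d j by apply: contraNneq hne => ->.
  case: hq => ->; apply/imsetP.
  + by exists (c j, d j); rewrite // in_setD inDg /= hE andbT.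
  + exists (d j, c j) => //; rewrite in_setD inDg /= eq_sym hcd /=.
    exact: (@Eb_rev A u hrev w _ _ hE hw).
- case/imsetP => [[a b]]; rewrite in_setD inDg /= => /andP [hab hE] ->.
  have [j [hj [hb [hc hd]]]] := occ_w hE.
  apply/inU; exists j.
  have hX1 : X j = (true, a) by rewrite Xlt // hb hc eqxx.
  have hX2 : X j.+1 = (false || (rev (B j) == w), b) by rewrite /= hb hd hw'.
  rewrite hX1 hX2 hb hw' /=; split => //; split; last by left.
  by apply: contraNneq hab => -[->].
Qed.

Lemma V_p : w = rev w -> Vset X m = (fun a => (true, a)) @: El.
Proof.
move=> hw; have hw' : (rev w == w) by rewrite -hw.
have hm := m_pos.
apply/setP => v; apply/idP/idP.
- move/inV => [j [hj <-]]; case: j hj => [|j] hj.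
  + rewrite Xlt // Bp // eqxx; apply/imsetP; exists (c 0) => //.
    by apply: Eb_l (st_w hm (Bp hw hm)).
  + rewrite /= Bp // hw'; apply/imsetP; exists (d j) => //.
    apply: Eb_l; exact: (@Eb_rev A u hrev w _ _ (st_w hj (Bp hw hj)) hw).
- case/imsetP => a ha ->.
  have [b hab] := El_b ha; have [j [hj [hb [hc _]]]] := occ_w hab.
  by apply/inV; exists j; split; [lia | rewrite Xlt // hb hc eqxx].
Qed.

Lemma count_p : w = rev w -> #|E| + 2 = 2 * #|El| + #|Eeq u w|.
Proof.
move=> hw; have := hW; rewrite U_p // V_p // !card_imset; first last.
- by move=> x y [].
- by move=> [x1 x2] [y1 y2] [-> ->].
have hD : E :&: Dg = (fun a => (a, a)) @: Eeq u w.
  apply/setP => -[a b]; rewrite in_setI inDg /=; apply/idP/idP.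
  - case/andP => hE /eqP hab; rewrite -hab in hE *; apply/imsetP; exists a => //.
    by apply/inEq; apply/inEb.
  - case/imsetP => x hx [-> ->]; rewrite eqxx andbT; apply/inEb; exact/inEq.
have := cardsID Dg E; rewrite hD card_imset; last by move=> x y [].
set e := #|E|; set l := #|El|; set q := #|Eeq u w|; set r := #|E :\: Dg|.
clearbody e l q r; lia.
Qed.

Lemma El_Er : w = rev w -> #|Er| = #|El|.
Proof.
move=> hw; apply: eq_card => a; apply/idP/idP.
- move/inEr => /hrev; rewrite rev_rcons -hw => h; exact/inEl.
- move/inEl => /hrev; rewrite rev_cons -hw => h; exact/inEr.
Qed.

End S6.

End P6.
Import P6.

Unset Implicit Arguments. Set Strict Implicit. Set Printing Implicit Defensive.

Theorem theorem21 (A : finType) (u : nat -> A) :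
  closed_under_reversal u ->
  finite_defect u ->
  exists K : nat, forall w : seq A,
    bispecial u w -> K <= size w ->
    (w != rev w -> bilat_mult u w = 0%R) /\
    (w = rev w -> bilat_mult u w = (#|Eeq u w|%:Z - 1)%R).
Proof.
move=> hrev hfd.
have [N hS] := S_prop hfd.
exists N.+1 => w [hfw [hl hr]] hK.
have hn : N < size w by lia.
have [M hM] := bound_M hrev w.
have hE0 : exists a, a \in Eleft u w.
  by apply/card_gt0P; lia.
rewrite /bilat_mult; split => hw.
- have h := count_np hrev hS hn hM hE0 hw.
  move: h; set e := #|Eboth u w|; set l := #|Eleft u w|; set r := #|Eright u w|.
  clearbody e l r; lia.
- have h := count_p hrev hS hn hM hE0 hw.
  have h2 := El_Er hrev hw.
  move: h h2; set e := #|Eboth u w|; set l := #|Eleft u w|; set r := #|Eright u w|.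
  set q := #|Eeq u w|; clearbody e l r q; lia.
Qed.
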